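(* Let $\mathbb{F}$ be any field and let $G=([n],E)$ be a simple undirected graph. Let $\mathcal{A}_G\le\Lambda(n,\mathbb{F})$ be the alternating matrix space spanned by the matrices $A_{i,j}$ with $\{i,j\}\in E$. Then: (1) for every $s\in\mathbb{N}$, $G$ has an independent set of size $s$ if and only if $\mathcal{A}_G$ has an isotropic space of dimension $s$; in particular $\alpha(G)=\alpha(\mathcal{A}_G)$; (2) for every $c\in\mathbb{N}$, $G$ has a vertex $c$-coloring (a partition of $[n]$ into $c$ independent sets) if and only if $\mathcal{A}_G$ has an isotropic $c$-decomposition; in particular $\chi(G)=\chi(\mathcal{A}_G)$.
   Context: $\Lambda(n,\mathbb{F})$ is the space of $n\times n$ alternating matrices over $\mathbb{F}$ (matrices $A$ with $v^tAv=0$ for all $v\in\mathbb{F}^n$). An alternating matrix space is a linear subspace $\mathcal{A}\le\Lambda(n,\mathbb{F})$. For $i<j$, $A_{i,j}$ is the $n\times n$ matrix with $(i,j)$ entry $1$, $(j,i)$ entry $-1$, all other entries $0$. A subspace $U\le\mathbb{F}^n$ is an isotropic space of $\mathcal{A}$ if $u^tAu'=0$ for all $u,u'\in U$ and all $A\in\mathcal{A}$. An isotropic $c$-decomposition of $\mathcal{A}$ is a direct sum decomposition $\mathbb{F}^n=U_1\oplus\cdots\oplus U_c$ into $c$ nonzero subspaces each of which is an isotropic space of $\mathcal{A}$. $\alpha(\mathcal{A})$ is the maximum dimension of an isotropic space of $\mathcal{A}$, and $\chi(\mathcal{A})$ is the minimum $c$ such that $\mathcal{A}$ admits an isotropic $c$-decomposition.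 $\alpha(G)$ and $\chi(G)$ are the independence number and chromatic number of $G$. *)

(* Defs.v *)
From HB Require Import structures.
From mathcomp Require Import all_boot all_order all_algebra.
Set Implicit Arguments. Unset Strict Implicit. Unset Printing Implicit Defensive.
Import GRing.Theory.
Local Open Scope ring_scope.

Definition simple_graph (n : nat) (e : rel 'I_n) : Prop :=
  symmetric e /\ irreflexive e.

Definition independent (n : nat) (e : rel 'I_n) (S : {set 'I_n}) : Prop :=
  forall i j, i \in S -> j \in S -> ~~ e i j.

Definition vertex_coloring (n : nat) (e : rel 'I_n) (c : nat) : Prop :=
  exists P : {set {set 'I_n}},
    [/\ partition P [set: 'I_n], #|P| = c & forall S, S \in P -> independent e S].

Definition alt_mx (F : fieldType) (n : nat) (i j : 'I_n) : 'M[F]_n :=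
  delta_mx i j - delta_mx j i.

(* A_G: the matrix space spanned by A_{i,j}, i<j, {i,j} in E, encoded
   (via mxvec) as the row space of an n^2 x n^2 matrix. A matrix A lies in
   A_G iff (mxvec A <= AG)%MS. *)
Definition AG (F : fieldType) (n : nat) (e : rel 'I_n) : 'M[F]_(n ^ 2) :=
  (\sum_(p : 'I_n * 'I_n | (p.1 < p.2)%N && e p.1 p.2)
      <<mxvec (alt_mx F p.1 p.2)>>)%MS.

(* U (row space of U, a subspace of F^n as row vectors) is an isotropic space
   of the alternating matrix space encoded by M. *)
Definition isotropic (F : fieldType) (n : nat) (M : 'M[F]_(n ^ 2))
  (U : 'M[F]_n) : Prop :=
  forall (u v : 'rV[F]_n) (A : 'M[F]_n),
    (u <= U)%MS -> (v <= U)%MS -> (mxvec A <= M)%MS -> u *m A *m v^T = 0.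

Definition isotropic_decomposition (F : fieldType) (n : nat)
  (M : 'M[F]_(n ^ 2)) (c : nat) : Prop :=
  exists Us : 'I_c -> 'M[F]_n,
    [/\ (\sum_(i < c) Us i :=: 1%:M)%MS,
        mxdirect (\sum_(i < c) Us i)%MS,
        forall i, Us i != 0
      & forall i, isotropic M (Us i)].

(* Main.v *)
Require Import Defs.
From HB Require Import structures.
From mathcomp Require Import all_boot all_order all_algebra.
From mathcomp Require Import zify.
Set Implicit Arguments. Unset Strict Implicit. Unset Printing Implicit Defensive.
Import GRing.Theory.
Local Open Scope ring_scope.

Section Aux.
Variables (F : fieldType) (n : nat).

Definition Mset (S : {set 'I_n}) : 'M[F]_(#|S|, n) :=
  \matrix_(r, j) (j == enum_val r)%:R.
Definition Dset (S : {set 'I_n}) : 'M[F]_n := (Mset S)^T *m Mset S.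

Lemma Dset_entry (S : {set 'I_n}) i j : Dset S i j = ((i == j) && (i \in S))%:R.
Proof.
rewrite /Dset mxE.
case: (boolP (i \in S)) => iS.
  rewrite (bigD1 (enum_rank_in iS i)) //= big1 ?addr0.
    rewrite !mxE enum_rankK_in // eqxx mul1r andbT eq_sym.
    by case: eqP.
  move=> r /negbTE rne; rewrite !mxE.
  case: (i =P enum_val r) => [ei|_]; last by rewrite mul0r.
  have rr : r = enum_rank_in iS i by apply: enum_val_inj; rewrite enum_rankK_in.
  by move: rne; rewrite rr eqxx.
rewrite andbF big1 // => r _; rewrite !mxE.
case: eqP => [ei|]; last by rewrite mul0r.
by move: iS; rewrite ei enum_valP.
Qed.

Lemma mul_Dset (S : {set 'I_n}) (x : 'rV[F]_n) j : (x *m Dset S) 0 j = x 0 j * (j \in S)%:R.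
Proof.
rewrite mxE (bigD1 j) //= big1 ?addr0; first by rewrite Dset_entry eqxx.
by move=> i /negbTE ij; rewrite Dset_entry ij mulr0.
Qed.

Lemma rank_Dset_le (S : {set 'I_n}) : (\rank (Dset S) <= #|S|)%N.
Proof.
apply: leq_trans (mxrankM_maxl _ _) _; exact: rank_leq_col.
Qed.

Lemma card_le_rank (S : {set 'I_n}) m (V : 'M[F]_(m, n)) :
  (forall j, j \in S -> ((delta_mx 0 j : 'rV[F]_n) <= V)%MS) -> (#|S| <= \rank V)%N.
Proof.
move=> HV.
have sub : (Mset S <= V)%MS.
  apply/row_subP => r.
  have -> : row r (Mset S) = delta_mx 0 (enum_val r).
    by apply/rowP => j; rewrite !mxE eqxx.
  exact/HV/enum_valP.
have e1 : Mset S *m (Mset S)^T = 1%:M.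
  apply/matrixP => r s; rewrite !mxE.
  rewrite (bigD1 (enum_val r)) //= big1 ?addr0.
    rewrite !mxE eqxx mul1r (inj_eq enum_val_inj) eq_sym.
    by case: eqP.
  by move=> j /negbTE jr; rewrite !mxE jr mul0r.
rewrite -{1}(mxrank1 F #|S|) -e1.
exact: leq_trans (mxrankM_maxl _ _) (mxrankS sub).
Qed.

Lemma mul_Dset_id (S : {set 'I_n}) (x : 'rV[F]_n) :
  (forall j, j \notin S -> x 0 j = 0) -> x *m Dset S = x.
Proof.
move=> H; apply/rowP => j; rewrite mul_Dset.
by case: (boolP (j \in S)) => jS; rewrite ?mulr1 // mulr0 H.
Qed.

Lemma Dset_sub (S : {set 'I_n}) (x : 'rV[F]_n) :
  (forall j, j \notin S -> x 0 j = 0) -> (x <= Dset S)%MS.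
Proof. by move=> H; rewrite -(mul_Dset_id H) submxMl. Qed.

Lemma sub_Dset (S : {set 'I_n}) (x : 'rV[F]_n) j : (x <= Dset S)%MS -> j \notin S -> x 0 j = 0.
Proof.
case/submxP => D -> jS.
by rewrite mul_Dset (negbTE jS) mulr0.
Qed.

Lemma delta_Dset (S : {set 'I_n}) j : j \in S -> ((delta_mx 0 j : 'rV[F]_n) <= Dset S)%MS.
Proof.
move=> jS; apply: Dset_sub => i iS; rewrite mxE eqxx /=.
by case: (i =P j) => // ij; move: iS; rewrite ij jS.
Qed.

Lemma rank_Dset (S : {set 'I_n}) : \rank (Dset S) = #|S|.
Proof.
apply/eqP; rewrite eqn_leq rank_Dset_le; apply: card_le_rank; exact: delta_Dset.
Qed.



Lemma sum_lt1 (I : finType) (f g : I -> nat) i1 :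
  (forall i, f i <= g i)%N -> (f i1 < g i1)%N -> (\sum_i f i < \sum_i g i)%N.
Proof.
move=> fg f1; rewrite (bigD1 i1) //= [X in (_ < X)%N](bigD1 i1) //=.
have := @leq_sum I (index_enum I) (fun i => i != i1) f g (fun i _ => fg i). lia.
Qed.

Lemma sum_lt2 (I : finType) (f g : I -> nat) i1 i2 : i1 != i2 ->
  (forall i, f i <= g i)%N -> (f i1 < g i1)%N -> (f i2 < g i2)%N ->
  ((\sum_i f i).+1 < \sum_i g i)%N.
Proof.
move=> i12 fg f1 f2; rewrite (bigD1 i1) //= [X in (_ < X)%N](bigD1 i1) //=.
rewrite (bigD1 i2) 1?eq_sym //= [X in (_ < _ + X)%N](bigD1 i2) 1?eq_sym //=.
have := @leq_sum I (index_enum I) (fun i => (i != i1) && (i != i2)) f g (fun i _ => fg i). lia.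
Qed.

Lemma rank_le_sum (I : finType) (U : I -> 'M[F]_n) k :
  (\rank (U k) <= \sum_i \rank (U i))%N.
Proof. by rewrite (bigD1 k) //= leq_addr. Qed.

Lemma sub_comb m1 m2 (x y : 'M[F]_(m1, n)) (B : 'M[F]_(m2, n)) t :
  (x <= B)%MS -> (y <= B)%MS -> (x - t *: y <= B)%MS.
Proof. by move=> hx hy; rewrite addmx_sub // -scaleNr scalemx_sub. Qed.

Lemma elim_entry (W V : 'rV[F]_n) a :
  V 0 a != 0 -> (W - (W 0 a / V 0 a) *: V) 0 a = 0.
Proof. move=> hV; rewrite !mxE divfK //; exact: subrr. Qed.

Lemma rank_sums_le (I : finType) (U : I -> 'M[F]_n) :
  (\rank (\sum_i U i)%MS <= \sum_i \rank (U i))%N.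
Proof.
elim/big_rec2: _ => [|i A r _ IH]; first by rewrite mxrank0.
apply: leq_trans (mxrank_adds_leqif _ _) _; by rewrite leq_add2l.
Qed.

Lemma key c (K : {set 'I_n}) (U : 'I_c -> 'M[F]_n) :
  (forall j, j \in K -> ((delta_mx 0 j : 'rV[F]_n) <= \sum_k U k)%MS) ->
  (\sum_k \rank (U k) <= #|K|)%N ->
  exists col : 'I_n -> nat, (forall j, j \in K -> col j < c)%N /\
    forall (k : 'I_c) (x : 'rV[F]_n), (x <= U k)%MS ->
      (forall j, j \in K -> col j = k -> x 0 j = 0) -> x = 0.
Proof.
have [N] := ubnP #|K|; elim: N K U => // N IH K U cardK Hspan Hrank.
case: (set_0Vmem K) => [K0 | [a aK]].
  exists (fun _ => 0%N); split; first by move=> j; rewrite K0 inE.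
  move=> k x xU _; apply/eqP; rewrite -submx0.
  apply: submx_trans xU _; rewrite submx0 -mxrank_eq0 -leqn0.
  by apply: leq_trans (rank_le_sum U k) _; rewrite K0 cards0 in Hrank.
have /sub_sumsmxP [u_ Ha] := Hspan a aK.
set v := fun k => u_ k *m U k.
have [m vm] : exists m, v m 0 a != 0.
  apply/existsP; apply: contraT => /existsPn H0.
  have : (delta_mx 0 a : 'rV[F]_n) 0 a = 0.
    rewrite Ha summxE big1 // => i _; apply/eqP; exact: negbNE (H0 i).
  by rewrite mxE !eqxx /= => /eqP; rewrite oner_eq0.
set Da := Dset [set~ a].
have Da_a (y : 'rV[F]_n) : (y *m Da) 0 a = 0 by rewrite mul_Dset !inE eqxx mulr0.
have Da_j (y : 'rV[F]_n) j : j != a -> (y *m Da) 0 j = y 0 j.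
  by move=> ja; rewrite mul_Dset !inE ja mulr1.
set U' := fun k => if k == m then (U m :&: Da)%MS else U k *m Da.
set K' := K :\ a.
have cardK' : #|K'| = #|K|.-1 by rewrite (cardsD1 a K) aK.
have vmU : (v m <= U m)%MS by exact: submxMl.
have vmDa : ~~ (v m <= Da)%MS.
  by apply: contra vm => /sub_Dset -> //; rewrite !inE eqxx.
have rkm : (\rank (U' m) < \rank (U m))%N.
  rewrite /U' eqxx; apply: rank_ltmx; rewrite ltmxE capmxSl /=.
  by apply: contra vmDa => /(submx_trans vmU) /submx_trans -> //; exact: capmxSr.
have rkle : forall k, (\rank (U' k) <= \rank (U k))%N.
  move=> k; case: (k =P m) => [->|/eqP km]; first exact: ltnW.
  rewrite /U' (negbTE km); exact: mxrankM_maxl.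
have Hspan' : forall j, j \in K' ->
    ((delta_mx 0 j : 'rV[F]_n) <= \sum_k U' k)%MS.
  move=> j; rewrite !inE => /andP[ja jK].
  have /sub_sumsmxP [w_ Hj] := Hspan j jK.
  set t := (w_ m *m U m) 0 a / v m 0 a.
  have -> : (delta_mx 0 j : 'rV[F]_n) =
      \sum_k ((w_ k *m U k - t *: v k) *m Da).
    rewrite -mulmx_suml sumrB -scaler_sumr -Hj -Ha.
    apply/rowP => l; rewrite mul_Dset !mxE !eqxx /= !inE.
    case: (l =P a) => [->|/eqP la]; first by rewrite eq_sym (negbTE ja) /= mulr0.
    by rewrite mulr0 subr0 mulr1.
  apply: summx_sub => k _; apply: (sumsmx_sup k) => //; rewrite /U'.
  case: eqP => [->|_]; last by apply: submxMr; rewrite sub_comb ?submxMl.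
  set y := _ - _.
  have ya : y 0 a = 0.
    exact: elim_entry.
  have yy : y *m Da = y.
    apply: mul_Dset_id => l; rewrite !inE negbK => /eqP ->; exact: ya.
  rewrite yy sub_capmx; apply/andP; split; last by rewrite -yy submxMl.
  by rewrite sub_comb ?submxMl.
have Hrank' : (\sum_k \rank (U' k) <= #|K'|)%N.
  have := sum_lt1 rkle rkm; rewrite cardK'; lia.
have cK' : (#|K'| < N)%N.
  have : (0 < #|K|)%N by apply/card_gt0P; exists a.
  rewrite cardK'; move: cardK; lia.
have [col' [Hcol' Hinj']] := IH K' U' cK' Hspan' Hrank'.
exists (fun j => if j == a then (m : nat) else col' j); split.
  move=> j jK; case: eqP => [_|/eqP ja]; first exact: ltn_ord.
  by apply: Hcol'; rewrite !inE ja.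
move=> k x xU Hx.
have Hx' : forall j, j \in K' -> col' j = k -> x 0 j = 0.
  move=> j; rewrite !inE => /andP[ja jK] cj; apply: (Hx j jK).
  by rewrite /= (negbTE ja).
case: (k =P m) => [km | /eqP km].
  rewrite km in xU Hx Hx'; apply: (Hinj' m) Hx'.
  have xa : x 0 a = 0 by apply: (Hx a aK); rewrite /= eqxx.
  rewrite /U' eqxx sub_capmx xU; apply: Dset_sub => l.
  by rewrite !inE negbK => /eqP ->.
have xDa : x *m Da = 0.
  apply: (Hinj' k); first by rewrite /U' (negbTE km) submxMr.
  move=> j jK' cj; rewrite Da_j; first exact: Hx' jK' cj.
  by move: jK'; rewrite !inE => /andP[].
have xE : x = x 0 a *: delta_mx 0 a.
  apply/rowP => l; rewrite !mxE eqxx /=.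
  case: (l =P a) => [->|/eqP la]; first by rewrite mulr1.
  by rewrite mulr0 -(Da_j x l la) xDa mxE.
case: (x 0 a =P 0) => [x0|/eqP x0]; first by rewrite xE x0 scale0r.
exfalso.
have eaU : ((delta_mx 0 a : 'rV[F]_n) <= U k)%MS.
  by rewrite -(scale1r (delta_mx 0 a)) -(mulVf x0) -scalerA -xE scalemx_sub.
have rkk : (\rank (U' k) < \rank (U k))%N.
  rewrite /U' (negbTE km) -(mxrank_mul_ker (U k) Da) -[X in (X < _)%N]addn0 ltn_add2l.
  rewrite lt0n mxrank_eq0; apply/eqP => H0.
  have : ((delta_mx 0 a : 'rV[F]_n) <= U k :&: kermx Da)%MS.
    rewrite sub_capmx eaU sub_kermx; apply/eqP/rowP => l.
    rewrite mul_Dset !mxE !inE eqxx /=.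
    by case: (l =P a) => _; rewrite ?mulr0 ?mul0r.
  rewrite H0 submx0 => /eqP/rowP/(_ a); rewrite !mxE !eqxx /= => /eqP.
  by rewrite oner_eq0.
have := sum_lt2 km rkle rkk rkm.
have := card_le_rank Hspan'.
have := rank_sums_le U'.
lia.
Qed.


Lemma sum_eq_each (I : finType) (f g : I -> nat) :
  (forall i, f i <= g i)%N -> (\sum_i g i <= \sum_i f i)%N -> forall i, f i = g i.
Proof.
move=> fg hs i; apply/eqP; rewrite eqn_leq fg /=; apply: contraT; rewrite -ltnNge => lt.
by have := sum_lt1 fg lt; rewrite ltnNge hs.
Qed.

Lemma decomp c (U : 'I_c -> 'M[F]_n) :
  (forall j, ((delta_mx 0 j : 'rV[F]_n) <= \sum_k U k)%MS) ->
  (\sum_k \rank (U k) <= n)%N ->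
  exists col : 'I_n -> nat, (forall j, col j < c)%N /\
    forall k : 'I_c,
      #|[set j | col j == k]| = \rank (U k) /\
      forall j, j \in [set j | col j == k] ->
        exists u : 'rV[F]_n, (u <= U k)%MS /\
          forall i, i \in [set j | col j == k] -> u 0 i = (i == j)%:R.
Proof.
move=> Hspan Hrank.
have HrT : (\sum_k \rank (U k) <= #|[set: 'I_n]|)%N by rewrite cardsT card_ord.
have [col [Hc Hinj]] := @key c [set: 'I_n] U (fun j _ => Hspan j) HrT.
exists col; split; first by move=> j; exact: Hc.
set J := fun k : 'I_c => [set j | col j == k].
have rkUD : forall k, \rank (U k *m Dset (J k)) = \rank (U k).
  move=> k; rewrite -[RHS](mxrank_mul_ker (U k) (Dset (J k))).
  suff -> : \rank (U k :&: kermx (Dset (J k))) = 0%N by rewrite addn0.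
  apply/eqP; rewrite mxrank_eq0 -submx0; apply/row_subP => r; rewrite submx0.
  apply/eqP; apply: (Hinj k).
    exact: submx_trans (row_sub _ _) (capmxSl _ _).
  move=> j _ cj.
  have : (row r (U k :&: kermx (Dset (J k))) <= kermx (Dset (J k)))%MS.
    exact: submx_trans (row_sub _ _) (capmxSr _ _).
  rewrite sub_kermx => /eqP/rowP/(_ j); rewrite mul_Dset !mxE inE cj eqxx mulr1.
  by [].
have le1 : forall k, (\rank (U k) <= #|J k|)%N.
  by move=> k; rewrite -rkUD -(rank_Dset (J k)) mxrankM_maxr.
have sumJ : (\sum_(k < c) #|J k|)%N = n.
  transitivity (\sum_(k < c) \sum_(j < n) (col j == k : nat))%N.
    by apply: eq_bigr => k _; rewrite -sum1_card big_mkcond /=; apply: eq_bigr => j _; rewrite inE; case: (_ == _).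
  rewrite exchange_big /= -[RHS]card_ord -sum1_card; apply: eq_bigr => j _.
  rewrite (bigD1 (Ordinal (Hc j (in_setT j)))) //= eqxx big1 ?addn0 //.
  move=> k kne; apply/eqP; rewrite eqb0; apply: contra kne => /eqP ck.
  by apply/eqP/val_inj; rewrite /= ck.
have lower : (n <= \sum_k \rank (U k))%N.
  apply: leq_trans (rank_sums_le U); rewrite -[X in (X <= _)%N]card_ord -cardsT.
  exact: card_le_rank (fun j _ => Hspan j).
have eqk := sum_eq_each le1 (leq_trans (eq_leq sumJ) lower).
move=> k; split; first by rewrite eqk.
move=> j jJ.
have sub1 : (U k *m Dset (J k) <= Dset (J k))%MS by exact: submxMl.
have sub2 : (Dset (J k) <= U k *m Dset (J k))%MS.
  by rewrite -(mxrank_leqif_sup sub1).2 rkUD rank_Dset eqk.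
have /submxP [w ew] := submx_trans (delta_Dset jJ) sub2.
exists (w *m U k); split; first exact: submxMl.
move=> i iJ; have := congr1 (fun M : 'rV[F]_n => M 0 i) ew.
by rewrite /= mulmxA mul_Dset iJ mulr1 mxE eqxx => <-.
Qed.

End Aux.

Section Iso.
Variables (F : fieldType) (n : nat).

Lemma rowdelta (u : 'rV[F]_n) (i j : 'I_n) : u *m delta_mx i j = u 0 i *: delta_mx 0 j.
Proof.
apply/rowP => l; rewrite !mxE (bigD1 i) //= big1 ?addr0.
  by rewrite !mxE !eqxx.
by move=> k /negbTE ki; rewrite !mxE ki mulr0.
Qed.

Lemma delta_vec (v : 'rV[F]_n) (j : 'I_n) : delta_mx 0 j *m v^T = (v 0 j)%:M.
Proof.
apply/matrixP => r s; rewrite (ord1 r) (ord1 s) !mxE (bigD1 j) //= big1 ?addr0.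
  by rewrite !mxE !eqxx mul1r.
by move=> k /negbTE kj; rewrite !mxE kj mul0r.
Qed.

Lemma bil (u v : 'rV[F]_n) i j :
  u *m alt_mx F i j *m v^T = (u 0 i * v 0 j - u 0 j * v 0 i)%:M.
Proof.
rewrite /alt_mx mulmxBr mulmxBl !rowdelta -!scalemxAl !delta_vec.
by rewrite !scale_scalar_mx raddfB.
Qed.


Lemma bil00 (u v : 'rV[F]_n) i j :
  (u *m alt_mx F i j *m v^T) 0 0 = u 0 i * v 0 j - u 0 j * v 0 i.
Proof. by rewrite bil mxE eqxx mulr1n. Qed.

Lemma alt_in_AG (e : rel 'I_n) (i j : 'I_n) :
  (i < j)%N -> e i j -> (mxvec (alt_mx F i j) <= AG F e)%MS.
Proof.
move=> lij eij; rewrite /AG; apply: (sumsmx_sup (i, j)); first by rewrite /= lij eij.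
by rewrite genmxE.
Qed.

Lemma iso_edge (e : rel 'I_n) (U : 'M[F]_n) : symmetric e ->
  isotropic (AG F e) U -> forall i j, e i j -> forall u v : 'rV[F]_n, (u <= U)%MS -> (v <= U)%MS ->
  u 0 i * v 0 j = u 0 j * v 0 i.
Proof.
move=> sym iso i j eij u v uU vU.
have H : forall i j : 'I_n, (i < j)%N -> e i j -> u 0 i * v 0 j = u 0 j * v 0 i.
  move=> i' j' lt e'; apply/eqP; rewrite -subr_eq0 -bil00 iso ?alt_in_AG //.
  by rewrite mxE.
case: (ltngtP i j) => [lt|gt|eq]; first exact: H.
  by rewrite sym in eij; rewrite (H _ _ gt eij).
by have -> : i = j by exact: val_inj.
Qed.

Lemma iso_of (e : rel 'I_n) (U : 'M[F]_n) :
  (forall u v : 'rV[F]_n, (u <= U)%MS -> (v <= U)%MS -> forall i j, e i j ->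
     u 0 i * v 0 j = u 0 j * v 0 i) -> isotropic (AG F e) U.
Proof.
move=> H u v A uU vU /sub_sumsmxP [w_ hA].
set P := fun p : 'I_n * 'I_n => ((p.1 < p.2)%N && e p.1 p.2).
set B := fun p : 'I_n * 'I_n => mxvec (alt_mx F p.1 p.2).
set s := fun p => (w_ p *m <<B p>>%MS *m pinvmx (B p)) 0 0.
have hX : forall p, w_ p *m <<B p>>%MS = s p *: B p.
  move=> p; have sub : (w_ p *m <<B p>> <= B p)%MS.
    by rewrite (submx_trans (submxMl _ _)) // genmxE.
  rewrite -{1}(mulmxKpV sub); rewrite [X in X *m _]mx11_scalar mul_scalar_mx.
  by [].
have eA : A = \sum_(p | P p) s p *: alt_mx F p.1 p.2.
  apply: (can_inj (@mxvecK _ n n)); rewrite hA linear_sum /=.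
  by apply: eq_bigr => p _; rewrite hX linearZ.
rewrite eA mulmx_sumr mulmx_suml big1 // => p /andP[_ ep].
rewrite -scalemxAr -scalemxAl bil.
by rewrite (H u v uU vU _ _ ep) subrr raddf0 scaler0.
Qed.

End Iso.

Section Main.
Variables (F : fieldType) (n : nat) (e : rel 'I_n).

Lemma indep_of (U : 'M[F]_n) (J : {set 'I_n}) : simple_graph e ->
  isotropic (AG F e) U ->
  (forall j, j \in J -> exists u : 'rV[F]_n, (u <= U)%MS /\
      forall i, i \in J -> u 0 i = (i == j)%:R) ->
  independent e J.
Proof.
move=> [sym irr] iso surj i j iJ jJ; apply/negP => eij.
case: (i =P j) => [ij | /eqP nij]; first by rewrite ij irr in eij.
have [u [uU hu]] := surj i iJ; have [v [vU hv]] := surj j jJ.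
have := iso_edge sym iso eij uU vU.
rewrite (hu i iJ) (hu j jJ) (hv i iJ) (hv j jJ) !eqxx (negbTE nij) eq_sym (negbTE nij).
by rewrite mulr1 mulr0 => /eqP; rewrite oner_eq0.
Qed.

Lemma Dset_iso (S : {set 'I_n}) : independent e S -> isotropic (AG F e) (Dset F S).
Proof.
move=> ind; apply: iso_of => u v uU vU i j eij.
case: (boolP (i \in S)) => iS; last by rewrite !(sub_Dset uU iS) (sub_Dset vU iS) mul0r mulr0.
case: (boolP (j \in S)) => jS; last by rewrite !(sub_Dset uU jS) (sub_Dset vU jS) mul0r mulr0.
by move: (ind i j iS jS); rewrite eij.
Qed.

End Main.

Unset Implicit Arguments.

Theorem theorem1p4 (F : fieldType) (n : nat) (e : rel 'I_n) :
  simple_graph e ->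
  (forall s : nat,
     (exists S : {set 'I_n}, independent e S /\ #|S| = s) <->
     (exists U : 'M[F]_n, isotropic (AG F e) U /\ \rank U = s)) /\
  (forall c : nat,
     vertex_coloring e c <-> isotropic_decomposition (AG F e) c).
Proof.
move=> sg; split.
  move=> s; split.
    move=> [S [ind <-]]; exists (Dset F S); split; first exact: Dset_iso.
    exact: rank_Dset.
  move=> [U [iso <-]].
  pose Us := fun k : 'I_2 => if k == 0 then U else (U^C)%MS.
  have hspan : forall j, ((delta_mx 0 j : 'rV[F]_n) <= \sum_k Us k)%MS.
    move=> j; apply: submx_trans (submx_full _ (addsmx_compl_full U)) _.
    rewrite addsmx_sub; apply/andP; split.
      by apply: (sumsmx_sup 0) => //; rewrite /Us eqxx.
    by apply: (sumsmx_sup 1) => //.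
  have hrank : (\sum_k \rank (Us k) <= n)%N.
    rewrite big_ord_recl big_ord1 /Us /= mxrank_compl.
    have := rank_leq_col U; lia.
  have [col [Hc Hk]] := decomp hspan hrank.
  have [card0 surj0] := Hk 0.
  exists [set j | col j == (0 : 'I_2)]; split; last by rewrite card0.
  by apply: (indep_of sg iso).
move=> c; split.
  move=> [P [hP hc hind]]; rewrite -hc.
  have hsub : forall j, ((delta_mx 0 j : 'rV[F]_n) <=
      \sum_(i < #|P|) Dset F (enum_val i))%MS.
    move=> j; move/and3P: hP => [/eqP hcov _ _].
    have : j \in cover P by rewrite hcov inE.
    move=> /bigcupP [B BP jB].
    apply: (sumsmx_sup (enum_rank_in BP B)) => //.
    by rewrite enum_rankK_in // delta_Dset.
  exists (fun i => Dset F (enum_val i)); split.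
  - apply/eqmxP; rewrite submx1 /=; apply/row_subP => j; rewrite row1.
    exact: hsub.
  - rewrite mxdirectEgeq /=.
    rewrite (eq_bigr (fun j : 'I_#|P| => #|(enum_val j : {set 'I_n})|)); last by move=> j _; exact: rank_Dset.
    rewrite -(big_enum_val (fun B : {set 'I_n} => #|B|)) -(card_partition hP).
    exact: card_le_rank (fun j _ => hsub j).
  - move=> i; rewrite -mxrank_eq0 rank_Dset cards_eq0.
    move/and3P: hP => [_ _ h0]; apply: contra h0 => /eqP <-; exact: enum_valP.
  - move=> i; apply: Dset_iso; apply: hind; exact: enum_valP.
move=> [Us [hsum hdir hnz hiso]].
have h1 : forall j, ((delta_mx 0 j : 'rV[F]_n) <= \sum_k Us k)%MS.
  by move=> j; rewrite hsum submx1.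
have hr : (\sum_k \rank (Us k) <= n)%N.
  by move: hdir; rewrite mxdirectE /= => /eqP <-; rewrite hsum mxrank1.
have [col [Hc Hk]] := decomp h1 hr.
pose J := fun k : 'I_c => [set j | col j == k].
have Jne : forall k, J k != set0.
  by move=> k; have [ck _] := Hk k; rewrite -cards_eq0 ck mxrank_eq0 hnz.
have Jinj : injective J.
  move=> k l eq; have /set0Pn [j jk] := Jne k.
  have jl : j \in J l by rewrite -eq.
  rewrite !inE in jk jl; apply/val_inj; by rewrite /= -(eqP jk) -(eqP jl).
exists [set J k | k : 'I_c]; split.
- apply/and3P; split.
  + apply/eqP/setP => j; rewrite inE; apply/bigcupP.
    by exists (J (Ordinal (Hc j))); [exact: imset_f | rewrite inE].
  + apply/trivIsetP => A B /imsetP[k _ ->] /imsetP[l _ ->] neq.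
    rewrite -setI_eq0; apply/eqP/setP => j; rewrite !inE.
    apply/negP => /andP[/eqP a /eqP b]; move: neq.
    have -> : k = l by apply/val_inj; rewrite /= -a -b.
    by rewrite eqxx.
  + apply/imsetP => [[k _ hk]]; move: (Jne k); by rewrite -hk eqxx.
- by rewrite card_imset // card_ord.
- move=> S /imsetP[k _ ->]; have [_ surj] := Hk k.
  exact: indep_of sg (hiso k) surj.
Qed.
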